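(* Let $G=(V,D,B)$ be a mixed graph with $V=\{1,\dots,n\}$ and let $D_L,D_R\subset D$. Let $G^*_{\mathrm{flow}}$ be the directed graph on $V\cup V'$, $V'=\{1',\dots,n'\}$, with edges $i\to j$ if $(j,i)\in D_L$, $i\to i'$ for all $i\in V$, $i\to j'$ if $(i,j)\in B$, and $i'\to j'$ if $(i,j)\in D_R$. Let $\tilde G=(\tilde V,\tilde D,\emptyset)$ be the bidirected subdivision of $G$: $\tilde V$ is $V$ together with one new vertex $u_{ij}$ for each bidirected edge $i\leftrightarrow j\in G$, and $\tilde D$ is $D$ together with the edges $u_{ij}\to i$ and $u_{ij}\to j$ for each such bidirected edge; let $\tilde D_L$ (resp. $\tilde D_R$) be $D_L$ (resp. $D_R$) together with all these new edges $u_{ij}\to i$, $u_{ij}\to j$. Let $\tilde G^*_{\mathrm{flow}}$ be the directed graph on $\tilde V\cup\tilde V'$ with edges $a\to b$ if $(b,a)\in\tilde D_L$, $a\to a'$ for all $a\in\tilde V$, and $a'\to b'$ if $(a,b)\in\tilde D_R$. In both networks all vertices and edges have capacity $1$. Then for any $S=\{s_1,\dots,s_k\}$, $T=\{t_1,\dots,t_k\}\subset V$, the maximum flow from $S$ to $T'=\{t_1',\dots,t_k'\}$ in $G^*_{\mathrm{flow}}$ equals the maximum flow from $S$ to $T'$ in $\tilde G^*_{\mathrm{flow}}$.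
   Context: A mixed graph $G=(V,D,B)$ has directed edges $D\subset V\times V$ and symmetric bidirected edges $B\subset V\times V$ (a bidirected edge $i\leftrightarrow j$ corresponds to the pair $(i,j),(j,i)\in B$), no self-loops. Maximum flow allows multiple sources and sinks and vertex capacities. *)

(* Defs.v *)
From HB Require Import structures.
From mathcomp Require Import all_boot all_order all_algebra.
From mathcomp Require Import reals.
Set Implicit Arguments. Unset Strict Implicit. Unset Printing Implicit Defensive.
Import Order.TTheory GRing.Theory Num.Theory.
Local Open Scope ring_scope.

(* Multiple sources/sinks are handled as with a super source feeding each
   s in S (supply sig s >= 0) and a super sink drained from each t in T
   (demand tau t >= 0).  Every edge has capacity 1, every vertex has capacity 1
   (total flow entering the vertex, including super-source supply, is <= 1). *)
Definition is_flow (R : realType) (W : finType) (e : rel W) (S T : {set W})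
    (f : W -> W -> R) (sig tau : W -> R) : Prop :=
  [/\ (forall x y, 0 <= f x y <= 1) /\ (forall x y, ~~ e x y -> f x y = 0),
      (forall x, 0 <= sig x) /\ (forall x, x \notin S -> sig x = 0),
      (forall x, 0 <= tau x) /\ (forall x, x \notin T -> tau x = 0),
      (forall x, \sum_(y : W) f y x + sig x = \sum_(y : W) f x y + tau x)
    & (forall x, \sum_(y : W) f y x + sig x <= 1)].

Definition flow_value (R : realType) (W : finType) (tau : W -> R) : R :=
  \sum_(x : W) tau x.

Definition is_max_flow (R : realType) (W : finType) (e : rel W) (S T : {set W})
    (m : R) : Prop :=
  (exists f sig tau, is_flow e S T f sig tau /\ flow_value tau = m) /\
  (forall f sig tau, is_flow e S T f sig tau -> flow_value tau <= m).

Definition mixed_graph (n : nat) (D B : rel 'I_n) : Prop :=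
  irreflexive D /\ irreflexive B /\ symmetric B.

(* G*_flow on V + V' : inl i = i, inr i = i'. *)
Definition Gflow (n : nat) (B DL DR : rel 'I_n) : rel ('I_n + 'I_n) :=
  fun a b =>
    match a, b with
    | inl i, inl j => DL j i
    | inl i, inr j => (i == j) || B i j
    | inr i, inr j => DR i j
    | inr _, inl _ => false
    end.

(* Bidirected subdivision: one new vertex u_ij per (unordered) bidirected
   edge i <-> j, represented by the pair (i, j) with i < j. *)
Definition bedge (n : nat) (B : rel 'I_n) :=
  {p : 'I_n * 'I_n | B p.1 p.2 && (p.1 < p.2)%N}.

Definition tV (n : nat) (B : rel 'I_n) := ('I_n + bedge B)%type.

Definition endpoint (n : nat) (B : rel 'I_n) (u : bedge B) (k : 'I_n) : bool :=
  ((sval u).1 == k) || ((sval u).2 == k).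

Definition tilde_rel (n : nat) (B : rel 'I_n) (X : rel 'I_n) : rel (tV B) :=
  fun a b =>
    match a, b with
    | inl i, inl j => X i j
    | inr u, inl k => endpoint u k
    | _, _ => false
    end.

Definition tildeD (n : nat) (D B : rel 'I_n) : rel (tV B) := @tilde_rel n B D.

Definition tGflow (n : nat) (B DL DR : rel 'I_n) : rel (tV B + tV B) :=
  fun a b =>
    match a, b with
    | inl x, inl y => @tilde_rel n B DL y x
    | inl x, inr y => x == y
    | inr x, inr y => @tilde_rel n B DR x y
    | inr _, inl _ => false
    end.

Arguments Gflow {n} B DL DR.
Arguments tGflow {n} B DL DR.
Arguments tilde_rel {n} B X.
Arguments tildeD {n} D B.
Arguments tV {n} B.
Arguments bedge {n} B.
Arguments mixed_graph {n} D B.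

(* Main.v *)
Require Import Defs.
From HB Require Import structures.
From mathcomp Require Import all_boot all_order all_algebra.
From mathcomp Require Import reals.
Import Order.TTheory GRing.Theory Num.Theory.
Local Open Scope ring_scope.

Section Comb.
Variables (R : realType) (n : nat) (B DL DR : rel 'I_n).
Hypothesis Bsym : symmetric B.
Hypothesis Birr : irreflexive B.

Lemma bedge_sum (G : 'I_n * 'I_n -> R) :
  \sum_(u : bedge B) G (sval u) = \sum_(x | B x.1 x.2 && (x.1 < x.2)%N) G x.
Proof.
have := @big_sub_cond R 0 +%R ('I_n * 'I_n)%type (fun x : 'I_n * 'I_n => B x.1 x.2 && (x.1 < x.2)%N) xpredT G.
rewrite big_mkcondr /=.
move=> ->.
by [].
Qed.
Lemma sum_delta (I : finType) (F : I -> R) i : \sum_a (if i == a then F a else 0) = F i.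
Proof.
rewrite (bigD1 i) //= eqxx big1 ?addr0 // => a /negbTE.
by rewrite eq_sym => ->.
Qed.

Lemma sum_delta' (I : finType) (F : I -> R) i : \sum_a (if a == i then F a else 0) = F i.
Proof. by rewrite -(@sum_delta I F i); apply: eq_bigr => a _; rewrite eq_sym. Qed.

Lemma sum_if (I : finType) (c : bool) (F : I -> R) :
  \sum_a (if c then F a else 0) = if c then \sum_a F a else 0.
Proof. by case: c => //; rewrite big1. Qed.

Lemma bedge_key (phi : 'I_n -> 'I_n -> R) (i : 'I_n)
  (hphi : forall a b, a != b -> ~~ B a b -> phi a b = 0) :
  \sum_(u : bedge B) ((if i == (sval u).1 then phi (sval u).1 (sval u).2 else 0) +
                      (if i == (sval u).2 then phi (sval u).2 (sval u).1 else 0))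
  = \sum_j phi i j - phi i i.
Proof.
rewrite (bedge_sum (fun x => (if i == x.1 then phi x.1 x.2 else 0) +
                      (if i == x.2 then phi x.2 x.1 else 0))).
rewrite big_mkcond /=.
rewrite -(pair_bigA _ (fun a b => if B a b && (a < b)%N then
   (if i == a then phi a b else 0) + (if i == b then phi b a else 0) else 0)) /=.
have E : forall a b, (if B a b && (a < b)%N then
   (if i == a then phi a b else 0) + (if i == b then phi b a else 0) else 0)
   = (if i == a then (if B a b && (a < b)%N then phi a b else 0) else 0) +
     (if i == b then (if B a b && (a < b)%N then phi b a else 0) else 0).
  by move=> a b; case: (B a b && _); case: (i == a); case: (i == b); rewrite ?addr0.
under eq_bigr do under eq_bigr do rewrite E.
under eq_bigr do rewrite big_split /=.
rewrite big_split /=.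
under eq_bigr do rewrite sum_if.
rewrite sum_delta.
rewrite (exchange_big).
under eq_bigr do rewrite sum_if.
rewrite sum_delta.
rewrite -big_split /=.
rewrite [in RHS](bigD1 i) //= addrC addrK.
rewrite (bigD1 i) //= Birr /= add0r.
rewrite ?add0r.
apply: eq_bigr => j ji.
rewrite (Bsym j i).
case Bij: (B i j); last first.
  by rewrite /= addr0 hphi // ?Bij // eq_sym.
case: (ltngtP i j) => /= [||/val_inj eij]; rewrite ?addr0 ?add0r //.
by rewrite eij eqxx in ji.
Qed.

Notation TW := (tV B + tV B)%type.
Notation GW := ('I_n + 'I_n)%type.

Lemma sumTW (F : TW -> R) : \sum_(x : TW) F x =
  \sum_i F (inl (inl i)) + \sum_(u : bedge B) F (inl (inr u)) +
  \sum_i F (inr (inl i)) + \sum_(u : bedge B) F (inr (inr u)).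
Proof. by rewrite !big_sumType /= !addrA. Qed.

Lemma sumGW (F : GW -> R) : \sum_(x : GW) F x = \sum_i F (inl i) + \sum_i F (inr i).
Proof. by rewrite big_sumType. Qed.

Section Mem.
Variable (S : {set 'I_n}).
Lemma memGl i : ((inl i : GW) \in [set (inl s : GW) | s in S]) = (i \in S).
Proof. by apply: mem_imset => a b [->]. Qed.
Lemma memGr i : ((inr i : GW) \in [set (inl s : GW) | s in S]) = false.
Proof. by apply/imsetP => -[]. Qed.
Lemma memGr' i : ((inr i : GW) \in [set (inr s : GW) | s in S]) = (i \in S).
Proof. by apply: mem_imset => a b [->]. Qed.
Lemma memGl' i : ((inl i : GW) \in [set (inr s : GW) | s in S]) = false.
Proof. by apply/imsetP => -[]. Qed.
Lemma memTL x : (x \in [set (inl (inl s) : TW) | s in S]) =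
  (match x with inl (inl i) => i \in S | _ => false end).
Proof.
case: x => [[i|u]|[i|u]]; first by apply: mem_imset => a b [->].
all: by apply/imsetP => -[].
Qed.
Lemma memTR x : (x \in [set (inr (inl s) : TW) | s in S]) =
  (match x with inr (inl i) => i \in S | _ => false end).
Proof.
case: x => [[i|u]|[i|u]]; last 2 first.
- by apply: mem_imset => a b [->].
all: by apply/imsetP => -[].
Qed.
End Mem.

Lemma le_term (I : finType) (F : I -> R) i : (forall j, 0 <= F j) -> F i <= \sum_j F j.
Proof.
move=> h; rewrite (bigD1 i) //= lerDl; apply: sumr_ge0 => j _; exact: h.
Qed.

Lemma cap_auto (W : finType) (g : W -> W -> R) (sg tg : W -> R) :
  (forall x y, 0 <= g x y) -> (forall x, 0 <= tg x) ->
  (forall x, \sum_y g y x + sg x = \sum_y g x y + tg x) ->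
  (forall x, \sum_y g y x + sg x <= 1) -> forall x y, g x y <= 1.
Proof.
move=> g0 t0 c cap x y; apply: le_trans (cap x); rewrite c.
apply: le_trans (@le_term W (g x) y (g0 x)) _; by rewrite lerDl.
Qed.

Section GT.
Variables (S T : {set 'I_n}) (f : GW -> GW -> R) (sig tau : GW -> R).
Hypothesis f01 : forall x y, 0 <= f x y <= 1.
Hypothesis fe : forall x y, ~~ Gflow B DL DR x y -> f x y = 0.
Hypothesis s0 : forall x, 0 <= sig x.
Hypothesis sS : forall x, x \notin [set (inl s : GW) | s in S] -> sig x = 0.
Hypothesis t0 : forall x, 0 <= tau x.
Hypothesis tT : forall x, x \notin [set (inr s : GW) | s in T] -> tau x = 0.
Hypothesis fc : forall x, \sum_y f y x + sig x = \sum_y f x y + tau x.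
Hypothesis fcap : forall x, \sum_y f y x + sig x <= 1.

Let f0 x y : 0 <= f x y. Proof. by case/andP: (f01 x y). Qed.
Let f1 x y : f x y <= 1. Proof. by case/andP: (f01 x y). Qed.

Definition mm i j := Num.min (f (inl i) (inr j)) (f (inl j) (inr i)).
Definition hh i j := f (inl i) (inr j) - mm i j + (if i == j then \sum_k mm i k else 0).

Lemma mm0 i j : 0 <= mm i j.
Proof. by rewrite /mm le_min !f0. Qed.
Lemma mmC i j : mm i j = mm j i.
Proof. by rewrite /mm minC. Qed.

Lemma hh0 i j : 0 <= hh i j.
Proof.
rewrite /hh; case: eqP => [->|_].
  rewrite /mm minxx subrr add0r; apply: sumr_ge0 => k _; exact: mm0.
by rewrite addr0 subr_ge0 /mm ge_min lexx.
Qed.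

Lemma hh_row i : \sum_j hh i j = \sum_j f (inl i) (inr j).
Proof.
rewrite /hh big_split /= sum_delta sumrB /=.
by rewrite subrK.
Qed.

Lemma hh_col j : \sum_i hh i j = \sum_i f (inl i) (inr j).
Proof.
rewrite /hh big_split /= sum_delta' sumrB /=.
have -> : \sum_k mm j k = \sum_i mm i j by apply: eq_bigr => k _; rewrite mmC.
by rewrite subrK.
Qed.

Lemma hh_off i j : i != j -> ~~ B i j -> hh i j = 0.
Proof.
move=> ij Bij.
have e1 : f (inl i) (inr j) = 0 by apply: fe; rewrite /= negb_or ij.
have e2 : f (inl j) (inr i) = 0 by apply: fe; rewrite /= negb_or eq_sym ij Bsym.
by rewrite /hh /mm e1 e2 minxx subrr (negbTE ij) addr0.
Qed.

Lemma hh_pair p q : p != q -> hh p q + hh q p <= 1.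
Proof.
move=> pq; rewrite /hh (negbTE pq) eq_sym (negbTE pq) !addr0 /mm.
rewrite (minC (f (inl q) (inr p))).
have [h|h] := boolP (f (inl p) (inr q) <= f (inl q) (inr p)).
  by rewrite (min_l h) subrr add0r lerBlDr (le_trans (f1 _ _)) // lerDl f0.
move: h; rewrite -ltNge => /ltW h.
by rewrite (min_r h) subrr addr0 lerBlDr (le_trans (f1 _ _)) // lerDl f0.
Qed.

Definition gg (x y : TW) : R :=
  match x, y with
  | inl (inl i), inl (inl j) => f (inl i) (inl j)
  | inl (inl i), inl (inr u) =>
      (if i == (sval u).1 then hh (sval u).1 (sval u).2 else 0) +
      (if i == (sval u).2 then hh (sval u).2 (sval u).1 else 0)
  | inl (inl i), inr (inl j) => if i == j then hh i j else 0
  | inl (inr u), inr (inr v) => if u == v then hh (sval u).1 (sval u).2 + hh (sval u).2 (sval u).1 else 0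
  | inr (inr u), inr (inl j) =>
      (if j == (sval u).1 then hh (sval u).2 (sval u).1 else 0) +
      (if j == (sval u).2 then hh (sval u).1 (sval u).2 else 0)
  | inr (inl i), inr (inl j) => f (inr i) (inr j)
  | _, _ => 0
  end.

Definition sgg (x : TW) : R :=
  match x with inl (inl i) => sig (inl i) | inr (inl i) => sig (inr i) | _ => 0 end.
Definition tgg (x : TW) : R :=
  match x with inl (inl i) => tau (inl i) | inr (inl i) => tau (inr i) | _ => 0 end.

Lemma gg0 x y : 0 <= gg x y.
Proof.
case: x => [[i|u]|[i|u]]; case: y => [[j|v]|[j|v]] //=; rewrite ?f0 //.
- by apply: addr_ge0; case: ifP => // _; exact: hh0.
- by case: ifP => // _; exact: hh0.
- by case: ifP => // _; apply: addr_ge0; exact: hh0.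
- by apply: addr_ge0; case: ifP => // _; exact: hh0.
Qed.

Lemma gge x y : ~~ tGflow B DL DR x y -> gg x y = 0.
Proof.
case: x => [[i|u]|[i|u]]; case: y => [[j|v]|[j|v]] //=.
- exact: (fe (inl i) (inl j)).
- rewrite /endpoint negb_or => /andP[h1 h2].
  by rewrite eq_sym (negbTE h1) eq_sym (negbTE h2) addr0.
- by move=> H; case: ifP => // /eqP e; subst; rewrite eqxx in H.
- by move=> H; case: ifP => // /eqP e; subst; rewrite eqxx in H.
- exact: (fe (inr i) (inr j)).
- rewrite /endpoint negb_or => /andP[h1 h2].
  by rewrite eq_sym (negbTE h1) eq_sym (negbTE h2) addr0.
Qed.

Lemma bedge_neq (u : bedge B) : (sval u).1 != (sval u).2.
Proof.
case: u => [[p q]] /= /andP[_ h]; apply/eqP => e; by rewrite e ltnn in h.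
Qed.

Lemma inL i : \sum_y gg y (inl (inl i)) = \sum_y f y (inl i).
Proof.
rewrite sumTW sumGW /= !big1_eq !addr0 [X in _ = _ + X]big1 ?addr0 //.
by move=> j _; apply: fe.
Qed.

Lemma outL i : \sum_y gg (inl (inl i)) y = \sum_y f (inl i) y.
Proof.
rewrite sumTW sumGW /= big1_eq addr0 -addrA; congr (_ + _).
rewrite sum_delta bedge_key; first by rewrite subrK hh_row.
exact: hh_off.
Qed.

Lemma inR j : \sum_y gg y (inr (inl j)) = \sum_y f y (inr j).
Proof.
have K := @bedge_key (fun a b => hh b a) j.
rewrite /= in K; rewrite sumTW sumGW /= big1_eq addr0 sum_delta' K; last first.
  by move=> a b ab Bab; apply: hh_off; rewrite 1?eq_sym // Bsym.
rewrite hh_col; set a := hh j j; set b := \sum_(i < n) f (inr i) (inr j).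
by rewrite addrC addrA subrK; congr (_ + _); apply: eq_bigr.
Qed.

Lemma outR j : \sum_y gg (inr (inl j)) y = \sum_y f (inr j) y.
Proof.
rewrite sumTW sumGW /= !big1_eq !add0r addr0 [X in _ = X + _]big1 ?add0r //.
by move=> i _; apply: fe.
Qed.

Lemma inU u : \sum_y gg y (inl (inr u)) = hh (sval u).1 (sval u).2 + hh (sval u).2 (sval u).1.
Proof.
by rewrite sumTW /= !big1_eq !addr0 big_split /= !sum_delta'.
Qed.

Lemma outU u : \sum_y gg (inl (inr u)) y = hh (sval u).1 (sval u).2 + hh (sval u).2 (sval u).1.
Proof.
by rewrite sumTW /= !big1_eq !add0r sum_delta.
Qed.

Lemma inU' u : \sum_y gg y (inr (inr u)) = hh (sval u).1 (sval u).2 + hh (sval u).2 (sval u).1.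
Proof.
by rewrite sumTW /= !big1_eq add0r !addr0 sum_delta'.
Qed.

Lemma outU' u : \sum_y gg (inr (inr u)) y = hh (sval u).1 (sval u).2 + hh (sval u).2 (sval u).1.
Proof.
by rewrite sumTW /= !big1_eq !add0r addr0 big_split /= !sum_delta' addrC.
Qed.

Lemma ggc x : \sum_y gg y x + sgg x = \sum_y gg x y + tgg x.
Proof.
case: x => [[i|u]|[i|u]].
- by rewrite inL outL; exact: (fc (inl i)).
- by rewrite inU outU.
- by rewrite inR outR; exact: (fc (inr i)).
- by rewrite inU' outU'.
Qed.

Lemma ggcap x : \sum_y gg y x + sgg x <= 1.
Proof.
case: x => [[i|u]|[i|u]].
- by rewrite inL; exact: (fcap (inl i)).
- by rewrite inU /= addr0; apply: hh_pair; exact: bedge_neq.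
- by rewrite inR; exact: (fcap (inr i)).
- by rewrite inU' /= addr0; apply: hh_pair; exact: bedge_neq.
Qed.

Lemma partGT_in : is_flow (tGflow B DL DR)
   [set (inl (inl s) : TW) | s in S] [set (inr (inl t) : TW) | t in T] gg sgg tgg
   /\ flow_value tgg = flow_value tau.
Proof.
split; last by rewrite /flow_value sumTW sumGW /= !big1_eq !addr0.
split.
- split; last exact: gge.
  move=> x y; rewrite gg0 /=; apply: (@cap_auto _ gg sgg tgg).
  + exact: gg0.
  + by case=> [[i|u]|[i|u]] //=.
  + exact: ggc.
  + exact: ggcap.
- split; first by case=> [[i|u]|[i|u]] //=.
  case=> [[i|u]|[i|u]]; rewrite memTL //= => iS.
  + by apply: sS; rewrite memGl.
  + by apply: sS; rewrite memGr.
- split; first by case=> [[i|u]|[i|u]] //=.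
  case=> [[i|u]|[i|u]]; rewrite memTR //= => iT.
  + by apply: tT; rewrite memGl'.
  + by apply: tT; rewrite memGr'.
- exact: ggc.
- exact: ggcap.
Qed.
End GT.

Lemma partGT (S T : {set 'I_n}) f sig tau :
  is_flow (Gflow B DL DR) [set (inl s : GW) | s in S] [set (inr t : GW) | t in T] f sig tau ->
  exists (g : TW -> TW -> R) (sg tg : TW -> R), is_flow (tGflow B DL DR)
   [set (inl (inl s) : TW) | s in S] [set (inr (inl t) : TW) | t in T] g sg tg
   /\ flow_value tg = flow_value tau.
Proof.
case=> [[f01 fe] [s0 sS] [t0 tT] fc fcap].
have := @partGT_in S T f sig tau f01 fe s0 sS t0 tT fc fcap.
by move=> H; do 3 eexists; exact: H.
Qed.
Lemma sum_only (I : finType) (F : I -> R) i : (forall j, j != i -> F j = 0) -> \sum_j F j = F i.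
Proof. by move=> h; rewrite (bigD1 i) //= big1 ?addr0 // => j /h. Qed.

Section TG.
Variables (S T : {set 'I_n}) (g : TW -> TW -> R) (sg tg : TW -> R).
Hypothesis g01 : forall x y, 0 <= g x y <= 1.
Hypothesis ge : forall x y, ~~ tGflow B DL DR x y -> g x y = 0.
Hypothesis s0 : forall x, 0 <= sg x.
Hypothesis sS : forall x, x \notin [set (inl (inl s) : TW) | s in S] -> sg x = 0.
Hypothesis t0 : forall x, 0 <= tg x.
Hypothesis tT : forall x, x \notin [set (inr (inl s) : TW) | s in T] -> tg x = 0.
Hypothesis gc : forall x, \sum_y g y x + sg x = \sum_y g x y + tg x.
Hypothesis gcap : forall x, \sum_y g y x + sg x <= 1.

Let g0 x y : 0 <= g x y. Proof. by case/andP: (g01 x y). Qed.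

Lemma gE x y : g x y = if tGflow B DL DR x y then g x y else 0.
Proof. by case: ifP => // /negbT /ge. Qed.

Lemma sgU u : sg (inl (inr u)) = 0. Proof. by apply: sS; rewrite memTL. Qed.
Lemma sgU' u : sg (inr (inr u)) = 0. Proof. by apply: sS; rewrite memTL. Qed.
Lemma tgU u : tg (inl (inr u)) = 0. Proof. by apply: tT; rewrite memTR. Qed.
Lemma tgU' u : tg (inr (inr u)) = 0. Proof. by apply: tT; rewrite memTR. Qed.

Definition FF (u : bedge B) := g (inl (inr u)) (inr (inr u)).

Lemma gcU u : \sum_i g (inl (inl i)) (inl (inr u)) = FF u.
Proof.
have := gc (inl (inr u)); rewrite !sumTW sgU tgU !addr0.
have z1 : \sum_u2 g (inl (inr u2)) (inl (inr u)) = 0 by apply: big1 => u2 _; exact: ge.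
have z2 : \sum_i g (inr (inl i)) (inl (inr u)) = 0 by apply: big1 => i _; exact: ge.
have z3 : \sum_u2 g (inr (inr u2)) (inl (inr u)) = 0 by apply: big1 => u2 _; exact: ge.
have z4 : \sum_i g (inl (inr u)) (inl (inl i)) = 0 by apply: big1 => i _; exact: ge.
have z5 : \sum_u2 g (inl (inr u)) (inl (inr u2)) = 0 by apply: big1 => u2 _; exact: ge.
have z6 : \sum_i g (inl (inr u)) (inr (inl i)) = 0 by apply: big1 => i _; exact: ge.
have z7 : \sum_u2 g (inl (inr u)) (inr (inr u2)) = FF u.
  apply: sum_only => u2 u2u; apply: ge => /=; apply/eqP => -[e]; by rewrite e eqxx in u2u.
by rewrite z1 z2 z3 z4 z5 z6 z7 !addr0 !add0r.
Qed.

Lemma gcU' u : \sum_j g (inr (inr u)) (inr (inl j)) = FF u.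
Proof.
have := gc (inr (inr u)); rewrite !sumTW sgU' tgU' !addr0.
have z1 : \sum_i g (inl (inl i)) (inr (inr u)) = 0 by apply: big1 => i _; exact: ge.
have z2 : \sum_u2 g (inl (inr u2)) (inr (inr u)) = FF u.
  apply: sum_only => u2 u2u; apply: ge => /=; apply/eqP => -[e]; by rewrite e eqxx in u2u.
have z3 : \sum_i g (inr (inl i)) (inr (inr u)) = 0 by apply: big1 => i _; exact: ge.
have z4 : \sum_u2 g (inr (inr u2)) (inr (inr u)) = 0 by apply: big1 => u2 _; exact: ge.
have z5 : \sum_i g (inr (inr u)) (inl (inl i)) = 0 by apply: big1 => i _; exact: ge.
have z6 : \sum_u2 g (inr (inr u)) (inl (inr u2)) = 0 by apply: big1 => u2 _; exact: ge.
have z7 : \sum_u2 g (inr (inr u)) (inr (inr u2)) = 0 by apply: big1 => u2 _; exact: ge.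
by rewrite z1 z2 z3 z4 z5 z6 z7 !addr0 !add0r.
Qed.
Lemma split_a (a F : R) : (F = 0 -> a = 0) -> a * F / F = a.
Proof.
move=> h; have [F0|F0] := eqVneq F 0; last by rewrite mulfK.
by rewrite (h F0) !mul0r.
Qed.

Lemma LU_le i u : g (inl (inl i)) (inl (inr u)) <= FF u.
Proof. by rewrite -gcU; apply: (@le_term _ (fun i => g (inl (inl i)) (inl (inr u)))) => j. Qed.
Lemma U'R_le j u : g (inr (inr u)) (inr (inl j)) <= FF u.
Proof. by rewrite -gcU'; apply: (@le_term _ (fun j => g (inr (inr u)) (inr (inl j)))) => k. Qed.

Lemma K1 i : \sum_j \sum_u g (inl (inl i)) (inl (inr u)) * g (inr (inr u)) (inr (inl j)) / FF u
  = \sum_u g (inl (inl i)) (inl (inr u)).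
Proof.
rewrite exchange_big; apply: eq_bigr => u _.
rewrite -mulr_suml -mulr_sumr gcU' split_a // => F0.
by apply/le_anti; rewrite g0 andbT -F0 LU_le.
Qed.

Lemma K2 j : \sum_i \sum_u g (inl (inl i)) (inl (inr u)) * g (inr (inr u)) (inr (inl j)) / FF u
  = \sum_u g (inr (inr u)) (inr (inl j)).
Proof.
rewrite exchange_big; apply: eq_bigr => u _.
rewrite -mulr_suml -mulr_suml gcU (mulrC (FF u)) split_a // => F0.
by apply/le_anti; rewrite g0 andbT -F0 U'R_le.
Qed.

Definition ff (x y : GW) : R :=
  match x, y with
  | inl i, inl j => g (inl (inl i)) (inl (inl j))
  | inl i, inr j => g (inl (inl i)) (inr (inl j)) +
      \sum_u g (inl (inl i)) (inl (inr u)) * g (inr (inr u)) (inr (inl j)) / FF u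
  | inr i, inr j => g (inr (inl i)) (inr (inl j))
  | inr _, inl _ => 0
  end.
Definition emb (x : GW) : TW := match x with inl i => inl (inl i) | inr i => inr (inl i) end.
Definition sff x := sg (emb x).
Definition tff x := tg (emb x).

Lemma inGl i : \sum_y ff y (inl i) = \sum_y g y (inl (inl i)).
Proof.
rewrite sumGW sumTW /= big1_eq addr0.
have z1 : \sum_u g (inl (inr u)) (inl (inl i)) = 0 by apply: big1 => u _; exact: ge.
have z2 : \sum_j g (inr (inl j)) (inl (inl i)) = 0 by apply: big1 => j _; exact: ge.
have z3 : \sum_u g (inr (inr u)) (inl (inl i)) = 0 by apply: big1 => u _; exact: ge.
by rewrite z1 z2 z3 !addr0.
Qed.

Lemma outGl i : \sum_y ff (inl i) y = \sum_y g (inl (inl i)) y.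
Proof.
rewrite sumGW sumTW /= big_split /= K1.
have z3 : \sum_u g (inl (inl i)) (inr (inr u)) = 0.
  by apply: big1 => u _; apply: ge.
rewrite z3 addr0 [LHS]addrC -addrA [RHS]addrC; congr (_ + _); rewrite addrC; congr (_ + _); exact: eq_bigr.
Qed.

Lemma inGr j : \sum_y ff y (inr j) = \sum_y g y (inr (inl j)).
Proof.
rewrite sumGW sumTW /= big_split /= K2.
have z1 : \sum_u g (inl (inr u)) (inr (inl j)) = 0.
  by apply: big1 => u _; apply: ge.
rewrite z1 addr0 addrAC; congr (_ + _).
Qed.

Lemma outGr j : \sum_y ff (inr j) y = \sum_y g (inr (inl j)) y.
Proof.
rewrite sumGW sumTW /= big1_eq add0r.
have z1 : \sum_i g (inr (inl j)) (inl (inl i)) = 0 by apply: big1 => i _; exact: ge.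
have z2 : \sum_u g (inr (inl j)) (inl (inr u)) = 0 by apply: big1 => u _; exact: ge.
have z3 : \sum_u g (inr (inl j)) (inr (inr u)) = 0 by apply: big1 => u _; exact: ge.
by rewrite z1 z2 z3 !addr0 add0r.
Qed.
Lemma ff0 x y : 0 <= ff x y.
Proof.
case: x => i; case: y => j //=; rewrite ?g0 //.
apply: addr_ge0; first exact: g0.
apply: sumr_ge0 => u _; apply: mulr_ge0; first by apply: mulr_ge0; exact: g0.
by rewrite invr_ge0 g0.
Qed.

Lemma ffe x y : ~~ Gflow B DL DR x y -> ff x y = 0.
Proof.
case: x => i; case: y => j //=.
- exact: (ge (inl (inl i)) (inl (inl j))).
- rewrite negb_or => /andP[ij Bij].
  rewrite ge /=; last by apply/eqP => -[e]; rewrite e eqxx in ij.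
  rewrite add0r big1 // => u _.
  case ei: (endpoint u i); last by rewrite ge ?mul0r // /= ei.
  case ej: (endpoint u j); last by rewrite (ge (inr (inr u))) ?mulr0 ?mul0r // /= ej.
  exfalso; move: ei ej; rewrite /endpoint.
  case: u => [[p q]] /= /andP[Bpq _].
  case/orP=> /eqP ? ; case/orP => /eqP ?; subst.
  + by rewrite eqxx in ij.
  + by rewrite Bpq in Bij.
  + by rewrite Bsym Bpq in Bij.
  + by rewrite eqxx in ij.
- exact: (ge (inr (inl i)) (inr (inl j))).
Qed.

Lemma ffc x : \sum_y ff y x + sff x = \sum_y ff x y + tff x.
Proof.
case: x => i.
- by rewrite inGl outGl; exact: (gc (inl (inl i))).
- by rewrite inGr outGr; exact: (gc (inr (inl i))).
Qed.

Lemma ffcap x : \sum_y ff y x + sff x <= 1.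
Proof.
case: x => i.
- by rewrite inGl; exact: (gcap (inl (inl i))).
- by rewrite inGr; exact: (gcap (inr (inl i))).
Qed.

Lemma partTG_in : is_flow (Gflow B DL DR)
   [set (inl s : GW) | s in S] [set (inr t : GW) | t in T] ff sff tff
   /\ flow_value tff = flow_value tg.
Proof.
split; last first.
  rewrite /flow_value sumTW sumGW /= (eq_bigr _ (fun u _ => tgU u)) (eq_bigr _ (fun u _ => tgU' u)) !big1_eq !addr0.
  by congr (_ + _).
split.
- split; last exact: ffe.
  move=> x y; rewrite ff0 /=; apply: (@cap_auto _ ff sff tff).
  + exact: ff0.
  + by move=> z; exact: t0.
  + exact: ffc.
  + exact: ffcap.
- split; first by move=> z; exact: s0.
  case=> i.
  + by rewrite memGl => iS; apply: sS; rewrite memTL.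
  + by move=> _; apply: sS; rewrite memTL.
- split; first by move=> z; exact: t0.
  case=> i.
  + by move=> _; apply: tT; rewrite memTR.
  + by rewrite memGr' => iT; apply: tT; rewrite memTR.
- exact: ffc.
- exact: ffcap.
Qed.
End TG.

Lemma partTG (S T : {set 'I_n}) g sg tg :
  is_flow (tGflow B DL DR)
   [set (inl (inl s) : TW) | s in S] [set (inr (inl t) : TW) | t in T] g sg tg ->
  exists (f : GW -> GW -> R) (sig tau : GW -> R),
  is_flow (Gflow B DL DR) [set (inl s : GW) | s in S] [set (inr t : GW) | t in T] f sig tau
   /\ flow_value tau = flow_value tg.
Proof.
case=> [[g01 ge] [s0 sS] [t0 tT] gc gcap].
have := @partTG_in S T g sg tg g01 ge s0 sS t0 tT gc gcap.
by move=> H; do 3 eexists; exact: H.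
Qed.
End Comb.

From mathcomp Require Import all_classical topology normedtype derive function_spaces.
Import numFieldNormedType.Exports.

Section Cpt.
Local Open Scope classical_set_scope.
Local Open Scope ring_scope.
Variables (R : realType) (K : finType).
Definition P := prod_topology (fun _ : K => R).
Lemma proj_cont (k : K) : continuous (fun v : P => v k).
Proof. exact: (@proj_continuous K (fun _ => R) k). Qed.
Lemma sum_cont (I : Type) (r : seq I) (F : I -> P -> R) :
  (forall i, continuous (F i)) -> continuous (fun v => \sum_(i <- r) F i v).
Proof.
move=> hF; elim: r => [|a r IH].
  have -> : (fun v : P => \sum_(i <- [::]) F i v) = fun _ => 0.
    by apply: funext => v; rewrite big_nil.
  exact: cst_continuous.
have -> : (fun v : P => \sum_(i <- a :: r) F i v) = (fun v => F a v + \sum_(i <- r) F i v).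
  by apply: funext => v; rewrite big_cons.
move=> x; apply: continuousD; [exact: hF | exact: IH].
Qed.
Lemma closed_leC (g h : P -> R) : continuous g -> continuous h ->
  closed [set v | g v <= h v].
Proof.
move=> cg ch.
have -> : [set v | g v <= h v] = (fun v => h v - g v) @^-1` [set x | 0 <= x].
  by apply/seteqP; split => v /=; rewrite subr_ge0.
apply: preimage_closed; last exact: closed_ge.
move=> x _; apply: continuousB; [exact: ch|exact: cg].
Qed.
Lemma closed_eqC (g h : P -> R) : continuous g -> continuous h ->
  closed [set v | g v = h v].
Proof.
move=> cg ch.
have -> : [set v | g v = h v] = (fun v => h v - g v) @^-1` [set x | x = 0].
  by apply/seteqP; split => v /=; [move=> ->; rewrite subrr|move/eqP; rewrite subr_eq0 => /eqP ->].
apply: preimage_closed; last exact: closed_eq.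
move=> x _; apply: continuousB; [exact: ch|exact: cg].
Qed.
Lemma closed_all (I : Type) (Q : I -> P -> Prop) :
  (forall i, closed [set v | Q i v]) -> closed [set v | forall i, Q i v].
Proof.
move=> h.
have -> : [set v | forall i, Q i v] = \bigcap_(i in setT) [set v | Q i v].
  apply/seteqP; split => v /= H.
    by move=> i _; exact: H.
  by move=> i; exact: (H i Logic.I).
by apply: closed_bigI => i _; apply: h.
Qed.
Lemma closed_imp (b : bool) (Q : P -> Prop) :
  closed [set v | Q v] -> closed [set v | b -> Q v].
Proof.
case: b => h.
  have -> : [set v | true -> Q v] = [set v | Q v] by apply/seteqP; split => v /=; auto.
  exact: h.
have -> : [set v | false -> Q v] = setT by apply/seteqP; split => v //=.
exact: closedT.
Qed.
Lemma closed_and (Q1 Q2 : P -> Prop) :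
  closed [set v | Q1 v] -> closed [set v | Q2 v] -> closed [set v | Q1 v /\ Q2 v].
Proof. exact: closedI. Qed.
Lemma box_compact : compact [set v : P | forall k, (`[0, 1]%classic : set R) (v k)].
Proof. exact: (@tychonoff K (fun _ => R) (fun _ => `[0, 1]%classic) (fun _ => @segment_compact R 0 1)). Qed.
Lemma cD (g h : P -> R) : continuous g -> continuous h -> continuous (fun v => g v + h v).
Proof. by move=> cg ch x; apply: continuousD; [exact: cg|exact: ch]. Qed.
Lemma cC (c : R) : continuous (fun _ : P => c).
Proof. exact: cst_continuous. Qed.
End Cpt.

Section MaxEx.
Local Open Scope ring_scope.
Variables (R : realType) (W : finType) (e : rel W) (S T : {set W}).
Definition KK := ((W * W) + W + W)%type.
Definition fl (v : P R KK) x y := v (inl (inl (x, y))).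
Definition sg (v : P R KK) x := v (inl (inr x)).
Definition ta (v : P R KK) x := v (inr x).
Definition form (f : W -> W -> R) (sig tau : W -> R) : Prop :=
  (forall x y, 0 <= f x y /\ f x y <= 1) /\ (forall x y, ~~ e x y -> f x y = 0) /\
  (forall x, 0 <= sig x) /\ (forall x, x \notin S -> sig x = 0) /\
  (forall x, 0 <= tau x) /\ (forall x, x \notin T -> tau x = 0) /\
  (forall x, \sum_(y : W) f y x + sig x = \sum_(y : W) f x y + tau x) /\
  (forall x, \sum_(y : W) f y x + sig x <= 1).
Lemma formP f sig tau : is_flow e S T f sig tau <-> form f sig tau.
Proof.
split.
  case=> [[h1 h2] [h3 h4] [h5 h6] h7 h8].
  split; first by move=> x y; apply/andP; exact: h1.
  by do 6 (split => //).
case=> h1 [h2 [h3 [h4 [h5 [h6 [h7 h8]]]]]]; split => //.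
by split => // x y; have [-> ->] := h1 x y.
Qed.

Local Open Scope classical_set_scope.
Definition Aset := [set v : P R KK | form (fl v) (sg v) (ta v)].

Lemma Aclosed : closed Aset.
Proof.
have pc := @proj_cont R KK.
have sc := @sum_cont R KK.
rewrite /Aset /form.
repeat apply: closed_and.
- apply: closed_all => x; apply: closed_all => y; apply: closed_and.
    by apply: closed_leC; [exact: cC|exact: pc].
  by apply: closed_leC; [exact: pc|exact: cC].
- apply: closed_all => x; apply: closed_all => y; apply: closed_imp.
  by apply: closed_eqC; [exact: pc|exact: cC].
- apply: closed_all => x.
  by apply: closed_leC; [exact: cC|exact: pc].
- apply: closed_all => x; apply: closed_imp.
  by apply: closed_eqC; [exact: pc|exact: cC].
- apply: closed_all => x.
  by apply: closed_leC; [exact: cC|exact: pc].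
- apply: closed_all => x; apply: closed_imp.
  by apply: closed_eqC; [exact: pc|exact: cC].
- apply: closed_all => x.
  by apply: closed_eqC; apply: cD; try exact: pc; apply: sc => y; exact: pc.
- apply: closed_all => x.
  by apply: closed_leC; [apply: cD; [apply: sc => y; exact: pc|exact: pc]|exact: cC].
Qed.

Lemma Abox : Aset `<=` [set v : P R KK | forall k, (`[0, 1]%classic : set R) (v k)].
Proof.
move=> v [h1 [h2 [h3 [h4 [h5 [h6 [h7 h8]]]]]]] k /=.
have inp x : 0 <= \sum_(y : W) fl v y x by apply: sumr_ge0 => y _; case: (h1 y x).
have outp x : 0 <= \sum_(y : W) fl v x y by apply: sumr_ge0 => y _; case: (h1 x y).
rewrite in_itv /=.
case: k => [[[x y]|x]|x].
- by case: (h1 x y) => -> ->.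
- apply/andP; split; first exact: h3.
  by apply: le_trans (h8 x); rewrite lerDr.
- apply/andP; split; first exact: h5.
  apply: le_trans (h8 x); rewrite h7.
  by rewrite /ta lerDr.
Qed.

Lemma max_flow_exists : exists m : R, is_max_flow e S T m.
Proof.
have A0 : Aset !=set0.
  exists (fun _ => 0); rewrite /Aset /form /fl /sg /ta /=.
  do 7 (split; first by move=> *; rewrite ?ler01 ?lexx ?big1 ?addr0 //).
  by move=> x; rewrite big1 // addr0 ler01.
have cA : compact Aset.
  apply: (subclosed_compact Aclosed) ; last exact: Abox.
  exact: box_compact.
have ct : continuous (fun v : P R KK => \sum_(x : W) ta v x).
  by apply: sum_cont => x; exact: proj_cont.
have cw : {within Aset, continuous (fun v : P R KK => \sum_(x : W) ta v x)}.
  exact: continuous_subspaceT.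
have [c /set_mem cA' cmax] := compact_EVT_max A0 cA cw.
exists (\sum_(x : W) ta c x); split.
  by exists (fl c), (sg c), (ta c); split => //; apply/formP.
move=> f sig tau /formP hf.
pose v : P R KK := fun k => match k with
  | inl (inl p) => f p.1 p.2 | inl (inr x) => sig x | inr x => tau x end.
have := cmax v (mem_set hf).
by [].
Qed.
End MaxEx.

Local Open Scope ring_scope.

Theorem lemmaA6 (R : realType) (n : nat) (D B DL DR : rel 'I_n)
    (hG : mixed_graph D B)
    (hDL : subrel DL D) (hDR : subrel DR D)
    (S T : {set 'I_n}) (hST : #|S| = #|T|) :
  exists m : R,
    is_max_flow (Gflow B DL DR)
      [set inl s | s in S] [set inr t | t in T] m /\
    is_max_flow (tGflow B DL DR)
      [set (inl (inl s) : tV B + tV B) | s in S]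
      [set (inr (inl t) : tV B + tV B) | t in T] m.
Proof.
case: hG => _ [Birr Bsym].
have [m Hm] := @max_flow_exists R _ (Gflow B DL DR) [set inl s | s in S] [set inr t | t in T].
exists m; split => //.
case: Hm => [[f [sig [tau [hf hv]]]] hmax].
split.
  have [g [sg [tg [hg hgv]]]] := @partGT R n B DL DR Bsym Birr S T f sig tau hf.
  by exists g, sg, tg; split => //; rewrite hgv.
move=> g sg tg hg.
have [f' [sig' [tau' [hf' hv']]]] := @partTG R n B DL DR Bsym S T g sg tg hg.
by rewrite -hv'; exact: (hmax _ _ _ hf').
Qed.
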